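(* For $\mathfrak{g}=\mathfrak{sl}_2(\mathbb{C})$ we have $\operatorname{QDer}(\mathfrak{g})=\operatorname{End}(\mathfrak{g})$; that is, for every linear map $\phi:\mathfrak{g}\to\mathfrak{g}$ there is a linear map $\tau:\mathfrak{g}\to\mathfrak{g}$ with $\tau([x,y])=[\phi(x),y]+[x,\phi(y)]$ for all $x,y\in\mathfrak{g}$.
   Context: The space of quasiderivations of a Lie algebra $\mathfrak{g}$ is $\operatorname{QDer}(\mathfrak{g})=\{\phi\in\operatorname{End}(\mathfrak{g})\mid\exists\,\tau\in\operatorname{End}(\mathfrak{g})\text{ with }\tau([x,y])=[\phi(x),y]+[x,\phi(y)]\ \forall x,y\in\mathfrak{g}\}$. *)

(* Defs.v *)
From HB Require Import structures.
From mathcomp Require Import all_boot all_order all_algebra.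
From mathcomp Require Import complex Rstruct.
From Stdlib Require Import Reals.
Set Implicit Arguments. Unset Strict Implicit. Unset Printing Implicit Defensive.
Import Order.TTheory GRing.Theory Num.Theory.
Local Open Scope ring_scope.

Definition CC : Type := complex Rdefinitions.R.

Definition sl2 (A : 'M[CC]_2) : bool := \tr A == 0.

Definition lie (A B : 'M[CC]_2) : 'M[CC]_2 := A *m B - B *m A.

(* Main.v *)
Require Import Defs.
From HB Require Import structures.
From mathcomp Require Import all_boot all_order all_algebra.
From mathcomp Require Import complex Rstruct.
From mathcomp Require Import ring.
Import GRing.Theory Num.Theory.
Local Open Scope ring_scope.

Definition hM : 'M[CC]_2 := \matrix_(i < 2, j < 2)
  (if (i:nat) == 0%N then (if (j:nat) == 0%N then 1 else 0) else (if (j:nat) == 0%N then 0 else -1)).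
Definition eM : 'M[CC]_2 := \matrix_(i < 2, j < 2)
  (if ((i:nat) == 0%N) && ((j:nat) == 1%N) then 1 else 0).
Definition fM : 'M[CC]_2 := \matrix_(i < 2, j < 2)
  (if ((i:nat) == 1%N) && ((j:nat) == 0%N) then 1 else 0).

Definition DD (phi : 'M[CC]_2 -> 'M[CC]_2) x y := lie (phi x) y + lie x (phi y).

Definition tauf (A B C : 'M[CC]_2) (M : 'M[CC]_2) : 'M[CC]_2 :=
  ((M 0 0 - M 1 1) / 2) *: A + (M 0 1 / 2) *: B - (M 1 0 / 2) *: C.

Lemma bo2 (F : 'I_2 -> CC) : \sum_(i < 2) F i = F 0 + F 1.
Proof.
rewrite !big_ord_recl big_ord0 addr0; congr (_ + F _); exact: val_inj.
Qed.

Lemma trlie X Y : \tr (lie X Y) = 0.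
Proof. by rewrite /lie raddfB /= mxtrace_mulC subrr. Qed.

Lemma trDD phi X Y : \tr (DD phi X Y) = 0.
Proof. by rewrite /DD mxtraceD !trlie addr0. Qed.

Lemma trcomb (a b c : CC) (X Y Z : 'M[CC]_2) : \tr X = 0 -> \tr Y = 0 -> \tr Z = 0 ->
  \tr (a *: X + b *: Y - c *: Z) = 0.
Proof.
move=> hx hy hz; rewrite mxtraceD raddfN mxtraceD /= !mxtraceZ hx hy hz.
by rewrite !mulr0 addr0 oppr0 addr0.
Qed.

Lemma ord2_cases (i : 'I_2) : i = 0 \/ i = 1.
Proof. case: i => [[|[|k]]] Hk; [left|right|]; try exact: val_inj. by []. Qed.

Lemma tauf_lin A B C : linear (tauf A B C).
Proof.
move=> k X Y; apply/matrixP => i j; rewrite /tauf !mxE; ring.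
Qed.

HB.instance Definition _ A B C := GRing.isLinear.Build CC _ _ *:%R (tauf A B C) (tauf_lin A B C).

Lemma decomp x : sl2 x -> x = x 0 0 *: hM + x 0 1 *: eM + x 1 0 *: fM.
Proof.
rewrite /sl2 /mxtrace bo2 => /eqP Ht.
apply/matrixP => i j; rewrite !mxE.
case: (ord2_cases i) => ->; case: (ord2_cases j) => -> /=; try ring.
have -> : x 1 1 = - x 0 0 by apply/eqP; rewrite -addr_eq0 addrC Ht.
ring.
Qed.

Definition mk (p q r s : CC) : 'M[CC]_2 := \matrix_(i < 2, j < 2)
  (if (i:nat) == 0%N then (if (j:nat) == 0%N then p else q) else (if (j:nat) == 0%N then r else s)).

Lemma mk00 p q r s : mk p q r s 0 0 = p. Proof. by rewrite mxE. Qed.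
Lemma mk01 p q r s : mk p q r s 0 1 = q. Proof. by rewrite mxE. Qed.
Lemma mk10 p q r s : mk p q r s 1 0 = r. Proof. by rewrite mxE. Qed.
Lemma mk11 p q r s : mk p q r s 1 1 = s. Proof. by rewrite mxE. Qed.

Lemma mkeq (A : 'M[CC]_2) p q r s :
  A 0 0 = p -> A 0 1 = q -> A 1 0 = r -> A 1 1 = s -> A = mk p q r s.
Proof.
move=> h1 h2 h3 h4; apply/matrixP => i j; rewrite mxE.
by case: (ord2_cases i) => ->; case: (ord2_cases j) => ->.
Qed.

Lemma mkD p q r s p' q' r' s' :
  mk p q r s + mk p' q' r' s' = mk (p + p') (q + q') (r + r') (s + s').
Proof. by apply: mkeq; rewrite mxE ?mk00 ?mk01 ?mk10 ?mk11. Qed.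
Lemma mkN p q r s : - mk p q r s = mk (- p) (- q) (- r) (- s).
Proof. by apply: mkeq; rewrite mxE ?mk00 ?mk01 ?mk10 ?mk11. Qed.
Lemma mkZ k p q r s : k *: mk p q r s = mk (k * p) (k * q) (k * r) (k * s).
Proof. by apply: mkeq; rewrite mxE ?mk00 ?mk01 ?mk10 ?mk11. Qed.
Lemma mkM p q r s p' q' r' s' :
  mk p q r s *m mk p' q' r' s' =
  mk (p * p' + q * r') (p * q' + q * s') (r * p' + s * r') (r * q' + s * s').
Proof. by apply: mkeq; rewrite mxE bo2 ?mk00 ?mk01 ?mk10 ?mk11. Qed.

Lemma hmk : hM = mk 1 0 0 (-1). Proof. by apply: mkeq; rewrite mxE. Qed.
Lemma emk : eM = mk 0 1 0 0. Proof. by apply: mkeq; rewrite mxE. Qed.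
Lemma fmk : fM = mk 0 0 1 0. Proof. by apply: mkeq; rewrite mxE. Qed.

Lemma key (p1 p2 p3 p4 q1 q2 q3 q4 r1 r2 r3 r4 : CC) (a b c d e f : CC) :
  let P := mk p1 p2 p3 p4 in let Q := mk q1 q2 q3 q4 in let R := mk r1 r2 r3 r4 in
  tauf (lie Q fM + lie eM R) (lie P eM + lie hM Q) (lie P fM + lie hM R)
    (lie (a*:hM + b*:eM + c*:fM) (d*:hM + e*:eM + f*:fM))
  = lie (a*:P + b*:Q + c*:R) (d*:hM + e*:eM + f*:fM)
    + lie (a*:hM + b*:eM + c*:fM) (d*:P + e*:Q + f*:R).
Proof.
have h2 : (2:CC) != 0 by rewrite pnatr_eq0.
rewrite /= /tauf /lie hmk emk fmk.
rewrite !(mkZ, mkD, mkM, mkN) !(mk00, mk01, mk10, mk11) ?(mkZ, mkD, mkN).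
by congr mk; field.
Qed.

Theorem proposition5p10 :
  forall phi : {linear 'M[CC]_2 -> 'M[CC]_2},
    (forall x, sl2 x -> sl2 (phi x)) ->
    exists tau : {linear 'M[CC]_2 -> 'M[CC]_2},
      (forall x, sl2 x -> sl2 (tau x)) /\
      (forall x y, sl2 x -> sl2 y ->
         tau (lie x y) = lie (phi x) y + lie x (phi y)).
Proof.
move=> phi _.
exists (tauf (DD phi eM fM) (DD phi hM eM) (DD phi hM fM) : {linear _ -> _}); split.
  move=> x _; rewrite /sl2 /= /tauf; apply/eqP; apply: trcomb; exact: trDD.
move=> x y Hx Hy /=.
have Ex := @decomp x Hx; have Ey := @decomp y Hy.
have Epx : phi x = x 0 0 *: phi hM + x 0 1 *: phi eM + x 1 0 *: phi fM.
  by rewrite {1}Ex !linearD !linearZ.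
have Epy : phi y = y 0 0 *: phi hM + y 0 1 *: phi eM + y 1 0 *: phi fM.
  by rewrite {1}Ey !linearD !linearZ.
have EP : forall A : 'M[CC]_2, A = mk (A 0 0) (A 0 1) (A 1 0) (A 1 1).
  by move=> A; apply: mkeq.
have := key (phi hM 0 0) (phi hM 0 1) (phi hM 1 0) (phi hM 1 1)
  (phi eM 0 0) (phi eM 0 1) (phi eM 1 0) (phi eM 1 1)
  (phi fM 0 0) (phi fM 0 1) (phi fM 1 0) (phi fM 1 1)
  (x 0 0) (x 0 1) (x 1 0) (y 0 0) (y 0 1) (y 1 0).
rewrite /= -(EP (phi hM)) -(EP (phi eM)) -(EP (phi fM)) -Epx -Epy -Ex -Ey.
by move=> h; exact: h.
Qed.
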